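(* For integers $n\ge 2$ and $0\le k\le n-1$, let $\mathrm{TH}_k:\{0,1\}^n\rightarrow\{0,1\}$ be defined by $\mathrm{TH}_k(x)=1$ iff $|x|>k$, where $|x|$ is the Hamming weight. Then $UC(\mathrm{TH}_k)=UQ(\mathrm{TH}_k)=1$, and $WUC(\mathrm{TH}_k)=WUQ(\mathrm{TH}_k)=\Theta(\log n)$, i.e. there are constants $c_1,c_2>0$ (independent of $n,k$) such that $c_1\log n\le WUQ(\mathrm{TH}_k)\le WUC(\mathrm{TH}_k)\le c_2\log n$ for all sufficiently large $n$ and all $0\le k\le n-1$.
   Context: Query model: a classical randomized query algorithm adaptively queries input bits $x_i$ (each query costs one) and outputs a bit; a quantum query algorithm alternates input-independent unitaries with the oracle $O_x:|i,b,z\rangle\mapsto|i,b\oplus x_i,z\rangle$ and measures an output bit. $UQ(f)$ (resp. $UC(f)$) is the minimum number of queries of a quantum (resp. classical randomized) algorithm that on every input outputs $f(x)$ with probability strictly greater than $1/2$. For an algorithm whose minimum over inputs of the success probability is $p>1/2$, its bias is $\beta=p-1/2$ and its weakly unbounded cost is (number of queries) $+\log(1/(2\beta))$; $WUQ(f)$ (resp. $WUC(f)$) is the minimum weakly unbounded cost over quantum (resp. classical randomized) algorithms. $\log$ is base 2. *)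

(* Defs.v *)
From HB Require Import structures.
From mathcomp Require Import all_boot all_order all_algebra.
From mathcomp Require Import all_classical all_reals all_analysis.
From mathcomp Require Import complex.

Set Implicit Arguments.
Unset Strict Implicit.
Unset Printing Implicit Defensive.

Import Order.TTheory GRing.Theory Num.Theory.
Local Open Scope ring_scope.
Local Open Scope classical_set_scope.

Definition input (n : nat) := {ffun 'I_n -> bool}.
Definition boolfun (n : nat) := input n -> bool.

Definition hweight (n : nat) (x : input n) : nat := (\sum_(i < n) (x i : nat))%N.

Definition TH (n k : nat) : boolfun n := fun x => (k < hweight x)%N.

Definition log2 {R : realType} (x : R) : R := ln x / ln 2.

Definition min_succ {R : realType} (n : nat) (succ : input n -> R) : R :=
  \big[Num.min/1]_(x : input n) succ x.

Definition wu_cost {R : realType} (T : nat) (p : R) : R :=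
  T%:R + log2 (1 / (2 * (p - 1 / 2))).

(* A randomized algorithm is a finite probability distribution over     *)
(* deterministic (adaptive) decision trees; its number of queries is    *)
(* the maximal depth of the trees in its support.                       *)
Inductive dtree (n : nat) : Type :=
| DLeaf : bool -> dtree n
| DQuery : 'I_n -> dtree n -> dtree n -> dtree n.
  (* DQuery i t0 t1 : query x_i, continue with t0 if x_i = 0, t1 if x_i = 1 *)

Fixpoint dt_depth (n : nat) (t : dtree n) : nat :=
  match t with
  | DLeaf _ => 0
  | DQuery _ t0 t1 => (maxn (dt_depth t0) (dt_depth t1)).+1
  end.

Fixpoint dt_eval (n : nat) (t : dtree n) (x : input n) : bool :=
  match t with
  | DLeaf b => b
  | DQuery i t0 t1 => if x i then dt_eval t1 x else dt_eval t0 x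
  end.

Definition ralg {R : realType} (n : nat) := seq (R * dtree n).

Definition ralg_valid {R : realType} (n T : nat) (A : @ralg R n) : Prop :=
  all (fun pt : R * dtree n => 0 <= pt.1) A /\
  \sum_(pt <- A) pt.1 = 1 /\
  all (fun pt : R * dtree n => (dt_depth pt.2 <= T)%N) A.

Definition ralg_succ {R : realType} (n : nat) (A : @ralg R n) (f : boolfun n)
  (x : input n) : R :=
  \sum_(pt <- A) pt.1 * (dt_eval pt.2 x == f x)%:R.

Definition UC {R : realType} (n : nat) (f : boolfun n) : R :=
  inf [set c : R | exists (T : nat) (A : @ralg R n),
        ralg_valid T A /\ (forall x, 1 / 2 < ralg_succ A f x) /\ c = T%:R].

Definition WUC {R : realType} (n : nat) (f : boolfun n) : R :=
  inf [set c : R | exists (T : nat) (A : @ralg R n),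
        ralg_valid T A /\ (forall x, 1 / 2 < ralg_succ A f x) /\
        c = wu_cost T (min_succ (ralg_succ A f))].

(* State space spanned by |i, b, z> with i : 'I_n, b : bool and a       *)
(* workspace z : 'I_m.+1 of arbitrary (finite) dimension.               *)
(* Operators are given by their matrix entries (row, column).           *)
Definition qbasis (n m : nat) := ('I_n * bool * 'I_m.+1)%type.

Definition qop {R : realType} (n m : nat) := qbasis n m -> qbasis n m -> R[i].
Definition qvec {R : realType} (n m : nat) := qbasis n m -> R[i].

Definition unitary {R : realType} (n m : nat) (U : @qop R n m) : Prop :=
  forall j j' : qbasis n m,
    \sum_(r : qbasis n m) conjc (U r j) * U r j' = (j == j')%:R.

Definition qapply {R : realType} (n m : nat) (U : @qop R n m) (v : @qvec R n m)
  : @qvec R n m := fun r => \sum_(c : qbasis n m) U r c * v c.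

Definition oracle {R : realType} (n m : nat) (x : input n) : @qop R n m :=
  fun r c => ((r == (c.1.1, addb c.1.2 (x c.1.1), c.2)) : bool)%:R.

Definition qinit {R : realType} (n m : nat) (e : qbasis n m) : @qvec R n m :=
  fun r => (r == e)%:R.

Fixpoint qrun {R : realType} (n m : nat) (U : nat -> @qop R n m)
  (e : qbasis n m) (x : input n) (t : nat) : @qvec R n m :=
  match t with
  | 0 => qapply (U 0%N) (qinit e)
  | t'.+1 => qapply (U t) (qapply (oracle x) (qrun U e x t'))
  end.

Definition sqnorm {R : realType} (z : R[i]) : R :=
  complex.Re z ^+ 2 + complex.Im z ^+ 2.

(* A T-query quantum algorithm: workspace size m, start basis state e,
   unitaries U 0, ..., U T; the output bit is obtained by measuring the
   b register in the computational basis. *)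
Record qalg {R : realType} (n : nat) := QAlg {
  qa_m : nat;
  qa_init : qbasis n qa_m;
  qa_U : nat -> @qop R n qa_m }.

Definition qalg_valid {R : realType} (n T : nat) (A : @qalg R n) : Prop :=
  forall t, (t <= T)%N -> unitary (@qa_U R n A t).

Definition qalg_prob1 {R : realType} (n T : nat) (A : @qalg R n) (x : input n) : R :=
  \sum_(r : qbasis n (@qa_m R n A) | r.1.2) sqnorm (qrun (@qa_U R n A) (@qa_init R n A) x T r).

Definition qalg_succ {R : realType} (n T : nat) (A : @qalg R n) (f : boolfun n)
  (x : input n) : R :=
  if f x then qalg_prob1 T A x else 1 - qalg_prob1 T A x.

Definition UQ {R : realType} (n : nat) (f : boolfun n) : R :=
  inf [set c : R | exists (T : nat) (A : @qalg R n),
        qalg_valid T A /\ (forall x, 1 / 2 < qalg_succ T A f x) /\ c = T%:R].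

Definition WUQ {R : realType} (n : nat) (f : boolfun n) : R :=
  inf [set c : R | exists (T : nat) (A : @qalg R n),
        qalg_valid T A /\ (forall x, 1 / 2 < qalg_succ T A f x) /\
        c = wu_cost T (min_succ (qalg_succ T A f))].

(* Main.v *)
Require Import Defs.
From HB Require Import structures.
From mathcomp Require Import all_boot all_order all_algebra.
From mathcomp Require Import all_classical all_reals all_analysis.
From mathcomp Require Import complex.
From mathcomp Require Import ring lra zify.
Import Order.TTheory GRing.Theory Num.Theory.
Local Open Scope ring_scope.
Set Implicit Arguments.
Unset Strict Implicit.
Unset Printing Implicit Defensive.
Section S.
Variable R : realType.
Lemma sqnormE (z : R[i]) : (sqnorm z)%:C%C = (z^* * z)%C.
Proof.
case: z => a b; rewrite /sqnorm /=.
rewrite /GRing.mul /=. congr Complex; ring.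
Qed.
Lemma sqnorm_ge0 (z : R[i]) : 0 <= sqnorm z.
Proof. by rewrite /sqnorm addr_ge0 // sqr_ge0. Qed.
Lemma sqnormR (a : R) : sqnorm (a%:C)%C = a ^+ 2.
Proof. by rewrite /sqnorm /= expr0n addr0. Qed.

Variables n m : nat.
Definition Nv (v : @qvec R n m) : R := \sum_r sqnorm (v r).

Lemma RC_inj (a b : R) : (a%:C)%C = (b%:C)%C -> a = b.
Proof. by move=> /(congr1 (@complex.Re R)). Qed.

Lemma NvC (v : @qvec R n m) : ((Nv v)%:C)%C = \sum_r ((v r)^* * v r)%C.
Proof. rewrite /Nv rmorph_sum; apply: eq_bigr => r _; exact: sqnormE. Qed.

Lemma unitary_norm (U : @qop R n m) v : unitary U -> Nv (qapply U v) = Nv v.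
Proof.
move=> HU.
have key : forall c c', \sum_r ((U r c * v c)^* * (U r c' * v c'))%C
    = (v c)^*%C * v c' * (c == c')%:R.
  move=> c c'; rewrite -HU big_distrr /=; apply: eq_bigr => r _.
  rewrite rmorphM /=; ring.
apply: RC_inj; rewrite !NvC /qapply.
under eq_bigr => r _ do rewrite rmorph_sum big_distrl /=.
rewrite exchange_big /=; apply: eq_bigr => c _.
under eq_bigr => r _ do rewrite big_distrr /=.
rewrite exchange_big /=.
rewrite (bigD1 c) //= key eqxx mulr1 big1 ?addr0 // => c' Hc'.
by rewrite key eq_sym (negbTE Hc') mulr0.
Qed.

Lemma real_unitary (U : @qop R n m) (u : qbasis n m -> qbasis n m -> R) :
  (forall r c, U r c = (u r c)%:C%C) ->
  (forall j j', \sum_r u r j * u r j' = (j == j')%:R) -> unitary U.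
Proof.
move=> HU Hu j j'; rewrite /unitary.
under eq_bigr => r _ do rewrite !HU conjc_real -rmorphM.
by rewrite -rmorph_sum Hu rmorph_nat.
Qed.

Definition pmat (g : qbasis n m -> qbasis n m) : @qop R n m :=
  fun r c => ((r == g c)%:R : R[i]).

Lemma unitary_pmat g : injective g -> unitary (pmat g).
Proof.
move=> ig; apply: (@real_unitary _ (fun r c => (r == g c)%:R)).
  by move=> r c; rewrite /pmat rmorph_nat.
move=> j j'; rewrite (bigD1 (g j)) //= big1 ?addr0.
  by rewrite eqxx mul1r (inj_eq ig).
by move=> r /negbTE ->; rewrite mul0r.
Qed.

Lemma qapply_pmat (J : finType) (g : qbasis n m -> qbasis n m) (a : J -> R[i])
   (s : J -> qbasis n m) :
  qapply (pmat g) (fun r => \sum_j a j * (r == s j)%:R)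
  = fun r => \sum_j a j * (r == g (s j))%:R.
Proof.
apply: funext => r; rewrite /qapply /pmat.
under eq_bigr => c _ do rewrite big_distrr /=.
rewrite exchange_big /=; apply: eq_bigr => j _.
rewrite (bigD1 (s j)) //= big1 ?addr0; first by rewrite eqxx mulr1 mulrC.
by move=> c /negbTE; rewrite eq_sym => ->; rewrite !mulr0.
Qed.

Definition flipx (x : input n) (c : qbasis n m) : qbasis n m :=
  (c.1.1, addb c.1.2 (x c.1.1), c.2).

Lemma flipxK x : involutive (flipx x).
Proof. by case=> [[i b] z]; rewrite /flipx /= addbK. Qed.

Lemma oracleE x : @oracle R n m x = pmat (flipx x).
Proof. by []. Qed.

Lemma qapply_oracle x (v : @qvec R n m) r : qapply (oracle x) v r = v (flipx x r).
Proof.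
rewrite oracleE /qapply /pmat (bigD1 (flipx x r)) //= big1 ?addr0.
  by rewrite flipxK eqxx mul1r.
move=> c Hc; suff /negbTE -> : r != flipx x c by rewrite mul0r.
by apply: contra Hc => /eqP ->; rewrite flipxK.
Qed.

Lemma sum_cond_le (I : finType) (P : pred I) (F : I -> R) :
  (forall i, 0 <= F i) -> \sum_(i | P i) F i <= \sum_i F i.
Proof.
move=> H; rewrite big_mkcond /=; apply: ler_sum => i _.
by case: (P i).
Qed.

Lemma Nv_ge0 (v : @qvec R n m) : 0 <= Nv v.
Proof. by apply: sumr_ge0 => r _; apply: sqnorm_ge0. Qed.

Lemma sum_flipx x (P : pred (qbasis n m)) (v : @qvec R n m) :
  (forall r, P (flipx x r) = P r) ->
  \sum_(r | P r) sqnorm (v (flipx x r)) = \sum_(r | P r) sqnorm (v r).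
Proof.
move=> HP; rewrite [RHS](reindex_inj (can_inj (flipxK x))) /=.
by apply: eq_bigl => r; rewrite HP.
Qed.

Lemma Nv_oracle x (v : @qvec R n m) : Nv (qapply (oracle x) v) = Nv v.
Proof.
rewrite /Nv; under eq_bigr => r _ do rewrite qapply_oracle.
exact: (@sum_flipx x predT).
Qed.

Definition mass (i : 'I_n) (v : @qvec R n m) : R :=
  \sum_(r | r.1.1 == i) sqnorm (v r).

Lemma mass_ge0 i v : 0 <= mass i v.
Proof. by apply: sumr_ge0 => r _; apply: sqnorm_ge0. Qed.

Lemma sum_mass v : \sum_i mass i v = Nv v.
Proof.
rewrite /mass /Nv (exchange_big_dep predT) //=; apply: eq_bigr => r _.
by rewrite (big_pred1 r.1.1).
Qed.

Lemma sqnorm_sub_le (a b : R[i]) : sqnorm (a - b) <= 2 * sqnorm a + 2 * sqnorm b.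
Proof.
case: a b => a1 a2 [b1 b2]; rewrite /sqnorm /=.
have h1 := sqr_ge0 (a1 + b1); have h2 := sqr_ge0 (a2 + b2).
nra.
Qed.

Lemma sqnorm_add_le (a b : R[i]) : sqnorm (a + b) <= 2 * sqnorm a + 2 * sqnorm b.
Proof.
case: a b => a1 a2 [b1 b2]; rewrite /sqnorm /=.
have h1 := sqr_ge0 (a1 - b1); have h2 := sqr_ge0 (a2 - b2).
nra.
Qed.

Lemma sqnormN (a : R[i]) : sqnorm (- a) = sqnorm a.
Proof. by case: a => a1 a2; rewrite /sqnorm /= !sqrrN. Qed.

Definition vsub (a b : @qvec R n m) : @qvec R n m := fun r => a r - b r.
Definition vadd (a b : @qvec R n m) : @qvec R n m := fun r => a r + b r.

Lemma Nv_subC a b : Nv (vsub a b) = Nv (vsub b a).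
Proof. by apply: eq_bigr => r _; rewrite /vsub -opprB sqnormN. Qed.

Lemma Nv_add_le a b : Nv (vadd a b) <= 2 * Nv a + 2 * Nv b.
Proof.
rewrite /Nv !mulr_sumr -big_split /=; apply: ler_sum => r _.
exact: sqnorm_add_le.
Qed.

Lemma qapply_sub (U : @qop R n m) a b :
  vsub (qapply U a) (qapply U b) = qapply U (vsub a b).
Proof.
apply: funext => r; rewrite /vsub /qapply -sumrB; apply: eq_bigr => c _.
by rewrite mulrBr.
Qed.

Definition flipb (x : input n) (i : 'I_n) : input n :=
  [ffun j => if j == i then ~~ x j else x j].

Lemma oracle_diff x i (a : @qvec R n m) :
  Nv (vsub (qapply (oracle x) a) (qapply (oracle (flipb x i)) a)) <= 4 * mass i a.
Proof.
rewrite /Nv /vsub.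
under eq_bigr => r _ do rewrite !qapply_oracle.
rewrite (bigID (fun r : qbasis n m => r.1.1 == i)) /=.
rewrite [X in _ + X]big1 ?addr0; last first.
  move=> r Hr; rewrite /flipx ffunE (negbTE Hr) subrr.
  by rewrite /sqnorm /= expr0n addr0.
apply: (@le_trans _ _ (\sum_(r | r.1.1 == i)
   (2 * sqnorm (a (flipx x r)) + 2 * sqnorm (a (flipx (flipb x i) r))))).
  by apply: ler_sum => r _; apply: sqnorm_sub_le.
rewrite big_split /= -!mulr_sumr !sum_flipx //.
rewrite /mass; set M := \sum_(r | _) _; lra.
Qed.
Lemma pw_ineq (be : R) (a b : R[i]) : 0 < be ->
  be * (sqnorm a - sqnorm b) <= sqnorm (a - b) + be ^+ 2 / 2 * (sqnorm a + sqnorm b).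
Proof.
case: a b => a1 a2 [b1 b2]; rewrite /sqnorm /= => hb.
have h1 := sqr_ge0 ((a1 - b1) - be * (a1 + b1) / 2).
have h2 := sqr_ge0 ((a2 - b2) - be * (a2 + b2) / 2).
have h3 := sqr_ge0 (be * (a1 - b1)).
have h4 := sqr_ge0 (be * (a2 - b2)).
nra.
Qed.

Lemma probdiff (P : pred (qbasis n m)) (a b : @qvec R n m) be :
  Nv a = 1 -> Nv b = 1 -> 0 < be ->
  be * (\sum_(r | P r) sqnorm (a r) - \sum_(r | P r) sqnorm (b r))
    <= Nv (vsub a b) + be ^+ 2.
Proof.
move=> Ha Hb hb.
rewrite -sumrB mulr_sumr.
apply: (@le_trans _ _ (\sum_(r | P r) (sqnorm (a r - b r) + be ^+ 2 / 2 * (sqnorm (a r) + sqnorm (b r))))).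
  by apply: ler_sum => r _; apply: pw_ineq.
apply: le_trans (sum_cond_le _ _) _.
  move=> r; apply: addr_ge0; first exact: sqnorm_ge0.
  apply: mulr_ge0; first by apply: divr_ge0 => //; apply: sqr_ge0.
  by apply: addr_ge0; apply: sqnorm_ge0.
rewrite big_split /= -mulr_sumr [X in _ * X]big_split /=.
move: Ha Hb; rewrite /Nv /vsub => -> ->; lra.
Qed.
End S.

Arguments Nv {R n m}.
Arguments mass {R n m}.
Arguments vsub {R n m}.
Arguments vadd {R n m}.

Section Hybrid.
Variable R : realType.
Variables (n : nat) (A : @qalg R n) (T : nat).
Hypothesis HA : qalg_valid T A.
Let m := @qa_m R n A.
Let U := @qa_U R n A.
Let e := @qa_init R n A.
Definition phi (x : input n) t : @qvec R n m := qrun U e x t.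

Lemma sqnorm_nat (b : bool) : sqnorm ((b%:R : R[i])) = b%:R.
Proof. by case: b; rewrite /sqnorm /= ?expr0n ?expr1n ?addr0. Qed.

Lemma Nv_phi x t : (t <= T)%N -> Nv (phi x t) = 1.
Proof.
elim: t => [|t IH] Ht.
  rewrite /phi /= unitary_norm; last exact: HA.
  rewrite /Nv /qinit (bigD1 e) //= big1 ?addr0.
    by rewrite eqxx sqnorm_nat.
  by move=> r /negbTE ->; rewrite sqnorm_nat.
rewrite /phi /= unitary_norm; last exact: HA.
by rewrite Nv_oracle IH // ltnW.
Qed.

Lemma Nv_vsub0 (a : @qvec R n m) : Nv (vsub a a) = 0.
Proof.
by rewrite /Nv big1 // => r _; rewrite /vsub subrr /sqnorm /= expr0n addr0.
Qed.

Lemma Erec x i t : (t.+1 <= T)%N ->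
  Nv (vsub (phi x t.+1) (phi (flipb x i) t.+1)) <=
  2 * Nv (vsub (phi x t) (phi (flipb x i) t)) + 8 * mass i (phi x t).
Proof.
move=> Ht; rewrite /phi /= qapply_sub unitary_norm; last exact: HA.
set a := qrun _ _ x t; set b := qrun _ _ (flipb x i) t.
set y := flipb x i.
have -> : vsub (qapply (oracle x) a) (qapply (oracle y) b) =
   vadd (qapply (oracle y) (vsub a b)) (vsub (qapply (oracle x) a) (qapply (oracle y) a)).
  apply: funext => r; rewrite -qapply_sub /vadd /vsub; ring.
apply: le_trans (Nv_add_le _ _) _.
rewrite Nv_oracle; have := oracle_diff x i a; rewrite -/y; lra.
Qed.

Lemma Ebound x i t : (t <= T)%N ->
  Nv (vsub (phi x t) (phi (flipb x i) t)) <=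
  8 * 2 ^+ t * \sum_(s < t) mass i (phi x s).
Proof.
elim: t => [|t IH] Ht.
  by rewrite big_ord0 mulr0 /phi /= Nv_vsub0.
apply: le_trans (Erec x i Ht) _.
have IH' := IH (ltnW Ht).
rewrite big_ord_recr /= exprS.
have h0 : 0 <= \sum_(s < t) mass i (phi x s) by apply: sumr_ge0 => s _; apply: mass_ge0.
have h1 : 0 <= mass i (phi x t) by apply: mass_ge0.
have h2 : 1 <= (2 : R) ^+ t by rewrite exprn_ege1 // ler1n.
set S := \sum_(s < t) _ in IH' h0 *; set M := mass i _ in h1 *.
set P := (2 : R) ^+ t in IH' h2 *.
nra.
Qed.

Lemma Esum x (Pi : pred 'I_n) :
  \sum_(i | Pi i) Nv (vsub (phi x T) (phi (flipb x i) T)) <= 8 * 2 ^+ T * T%:R.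
Proof.
apply: (@le_trans _ _ (\sum_(i | Pi i) (8 * 2 ^+ T * \sum_(s < T) mass i (phi x s)))).
  by apply: ler_sum => i _; apply: Ebound.
apply: le_trans (sum_cond_le _ _) _.
  move=> i; apply: mulr_ge0; first by apply: mulr_ge0 => //; apply: exprn_ge0.
  by apply: sumr_ge0 => s _; apply: mass_ge0.
rewrite -mulr_sumr exchange_big /=.
have -> : \sum_(s < T) \sum_i mass i (phi x s) = T%:R.
  rewrite (eq_bigr (fun _ => 1)); first by rewrite sumr_const card_ord.
  by move=> s _; rewrite sum_mass Nv_phi // ltnW.
by [].
Qed.

End Hybrid.


Lemma sum_lt_ord (n j : nat) : (\sum_(i < n) ((i < j)%N : nat))%N = minn j n.
Proof.
elim: n => [|n IH]; first by rewrite big_ord0 minn0.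
rewrite big_ord_recr /= IH; case: (ltnP n j) => H /=; lia.
Qed.

Definition pref (n j : nat) : input n := [ffun i : 'I_n => (i < j)%N].

Lemma hweight_pref n j : (j <= n)%N -> hweight (pref n j) = j.
Proof.
move=> H; rewrite /hweight (eq_bigr (fun i : 'I_n => ((i < j)%N : nat))).
  by rewrite sum_lt_ord; lia.
by move=> i _; rewrite ffunE.
Qed.

Lemma hweight_flip n (x : input n) i :
  (hweight (flipb x i) + x i = hweight x + ~~ x i)%N.
Proof.
rewrite /hweight (bigD1 i) //= [X in (_ = X + _)%N](bigD1 i) //= ffunE eqxx.
rewrite (eq_bigr (fun j => (x j : nat))); last first.
  by move=> j /negbTE Hj; rewrite ffunE Hj.
case: (x i) => /=; lia.
Qed.

Lemma sum_bool_R (R : realType) n (x : input n) :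
  \sum_i ((x i)%:R : R) = (hweight x)%:R.
Proof. by rewrite /hweight natr_sum. Qed.

Lemma sum_nbool_R (R : realType) n (x : input n) :
  \sum_i ((~~ x i)%:R : R) = n%:R - (hweight x)%:R.
Proof.
rewrite -sum_bool_R -[n in n%:R]card_ord -sumr_const -sumrB.
by apply: eq_bigr => i _; case: (x i) => /=; rewrite ?subr0 ?subrr.
Qed.

Section Classical.
Variable R : realType.
Variables n k : nat.
Hypothesis Hn : (1 <= n)%N.
Hypothesis Hk : (k <= n - 1)%N.

Definition tq (i : 'I_n) : dtree n := DQuery i (DLeaf n false) (DLeaf n true).
Let nR : R := n%:R.
Definition wq : R := 1 / 2 - (2 * k%:R + 1) / (4 * nR).
Definition wr : R := (2 * k%:R + 1) / (4 * nR).
Definition A1 : @ralg R n :=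
  [seq (1 / (2 * nR), tq i) | i <- enum 'I_n] ++
  [:: (wq, DLeaf n true); (wr, DLeaf n false)].

Lemma nR_gt0 : 0 < nR.
Proof. by rewrite /nR ltr0n. Qed.

Lemma kR_le : k%:R + 1 <= nR.
Proof. by rewrite /nR -[1]/(1%:R) -natrD ler_nat; lia. Qed.

Lemma A1_valid : ralg_valid 1 A1.
Proof.
have hn := nR_gt0; have hk := kR_le.
split; [|split].
- rewrite all_cat /= andbT; apply/andP; split.
    by rewrite all_map; apply/allP => i _ /=; rewrite divr_ge0 // mulr_ge0 // ltW.
  apply/andP; split.
    rewrite /wq subr_ge0 ler_pdivrMr ?mulr_gt0 //; lra.
  by rewrite /wr divr_ge0 ?mulr_ge0 ?ltW //; lra.
- rewrite big_cat /= !big_cons big_nil big_map /=.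
  rewrite big_enum /= sumr_const card_ord -mulr_natr -/nR /wq /wr.
  field; lra.
- rewrite all_cat /= andbT all_map; apply/allP => i _ /=.
  by rewrite max0n.
Qed.

Lemma A1_succ x : 1 / 2 + 1 / (4 * nR) <= ralg_succ A1 (@TH n k) x.
Proof.
have hn := nR_gt0; have hk := kR_le.
rewrite /ralg_succ big_cat /= !big_cons big_nil big_map /= big_enum /=.
have hw : (hweight x)%:R <= nR by rewrite /nR ler_nat /hweight -[X in (_ <= X)%N]card_ord -sum1_card; apply: leq_sum => i _; case: (x i).
rewrite /TH; case: (ltnP k (hweight x)) => Hkw /=.
- have -> : \sum_(i in 'I_n) 1 / (2 * nR) * (dt_eval (tq i) x == true)%:R
     = (hweight x)%:R / (2 * nR).
    rewrite -sum_bool_R mulr_suml; apply: eq_bigr => i _.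
    by rewrite /tq /=; case: (x i) => /=; rewrite ?mulr1 ?mulr0 ?mul1r ?mul0r.
  have : (k%:R + 1 : R) <= (hweight x)%:R.
    by rewrite -[1]/(1%:R) -natrD ler_nat; lia.
  rewrite /wq /wr /= => hkw.
  set w := (hweight x)%:R in hw hkw *; set K := k%:R in hk hkw *.
  rewrite -subr_ge0.
  have -> : w / (2 * nR) + ((1 / 2 - (2 * K + 1) / (4 * nR)) * 1 +
     ((2 * K + 1) / (4 * nR) * 0 + 0)) - (1 / 2 + 1 / (4 * nR))
     = (2 * w - 2 * K - 2) / (4 * nR) by field; lra.
  by rewrite divr_ge0 //; lra.
- have -> : \sum_(i in 'I_n) 1 / (2 * nR) * ((if x i then true else false) == false)%:R
     = (nR - (hweight x)%:R) / (2 * nR).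
    rewrite /nR -sum_nbool_R mulr_suml; apply: eq_bigr => i _.
    by case: (x i) => /=; rewrite ?mulr1 ?mulr0 ?mul1r ?mul0r.
  have : ((hweight x)%:R : R) <= k%:R by rewrite ler_nat.
  rewrite /wq /wr /= => hkw.
  set w := (hweight x)%:R in hw hkw *; set K := k%:R in hk hkw *.
  rewrite -subr_ge0.
  have -> : (nR - w) / (2 * nR) + ((1 / 2 - (2 * K + 1) / (4 * nR)) * 0 +
     ((2 * K + 1) / (4 * nR) * 1 + 0)) - (1 / 2 + 1 / (4 * nR))
     = (2 * K - 2 * w) / (4 * nR) by field; lra.
  by rewrite divr_ge0 //; lra.
Qed.
End Classical.


Section Walk.
Variables (n : nat) (i0 : 'I_n).
Definition qry (t : dtree n) : 'I_n := if t is DQuery i _ _ then i else i0.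
Definition stp (t : dtree n) (b : bool) : dtree n :=
  if t is DQuery _ t0 t1 then (if b then t1 else t0) else t.
Definition leafv (t : dtree n) : bool := if t is DLeaf b then b else false.
Fixpoint wk (t : dtree n) (h : nat -> bool) (s : nat) : dtree n :=
  if s is s'.+1 then stp (wk t h s') (h s') else t.
Definition dpath (t : dtree n) (x : input n) (s : nat) : dtree n :=
  iter s (fun u => stp u (x (qry u))) t.

Lemma wk_ext t (h h' : nat -> bool) s : (forall k, (k < s)%N -> h k = h' k) -> wk t h s = wk t h' s.
Proof.
elim: s => [//|s IH] H /=; rewrite IH ?H // => k Hk; apply: H; exact: ltnW.
Qed.

Lemma wk_path t (h : nat -> bool) (x : input n) s : (forall k, (k < s)%N -> h k = x (qry (dpath t x k))) ->
  wk t h s = dpath t x s.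
Proof.
elim: s => [//|s IH] H /=; rewrite IH ?H //; last by move=> k Hk; apply: H; exact: ltnW.
Qed.

Lemma pathS t x s : dpath t x s.+1 = dpath (stp t (x (qry t))) x s.
Proof. by rewrite /dpath iterSr. Qed.

Lemma eval_path t x s : (dt_depth t <= s)%N -> dt_eval t x = leafv (dpath t x s).
Proof.
elim: t s => [b|i t0 IH0 t1 IH1] s /=.
  move=> _; rewrite /dpath; suff -> : iter s (fun u => stp u (x (qry u))) (DLeaf n b) = DLeaf n b by [].
  by elim: s => //= s ->.
case: s => [//|s] Hd; rewrite pathS /=.
case: (x i).
  by apply: IH1; move: Hd; rewrite ltnS geq_max => /andP[].
by apply: IH0; move: Hd; rewrite ltnS geq_max => /andP[].
Qed.
End Walk.

Section InjSum.
Variables (R : realType) (V : nzRingType) (I J : finType).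
Lemma pt_inj (s : J -> I) (F : V -> R) (c : J -> V) r :
  injective s -> F 0 = 0 ->
  F (\sum_j c j * (r == s j)%:R) = \sum_j F (c j) * (r == s j)%:R.
Proof.
move=> si F0; case: (pickP (fun j => r == s j)) => [j0 /eqP Hj0|none].
  rewrite (bigD1 j0) //= [X in _ = X](bigD1 j0) //= Hj0 eqxx !mulr1.
  rewrite !big1 ?addr0 // => j Hj; rewrite (_ : (s j0 == s j) = false) ?mulr0 //.
    by apply/negbTE; apply: contra Hj => /eqP /si ->.
  by apply/negbTE; apply: contra Hj => /eqP /si ->.
rewrite !big1 // => j _; by rewrite none mulr0.
Qed.

Lemma sum_inj (s : J -> I) (F : V -> R) (c : J -> V) (P : pred I) :
  injective s -> F 0 = 0 ->
  \sum_(r | P r) F (\sum_j c j * (r == s j)%:R) = \sum_j (P (s j))%:R * F (c j).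
Proof.
move=> si F0; under eq_bigr => r _ do rewrite pt_inj //.
rewrite exchange_big /=; apply: eq_bigr => j _.
rewrite -mulr_sumr mulrC; congr (_ * _).
rewrite big_mkcond (bigD1 (s j)) //= eqxx big1 ?addr0.
  by case: (P (s j)).
by move=> r /negbTE ->; case: (P r).
Qed.
End InjSum.

Section Sim.
Variables (R : realType) (n : nat) (i0 : 'I_n) (T : nat) (A : @ralg R n).
Hypothesis HA : ralg_valid T A.
Let L := size A.
Let d0 : R * dtree n := (0, DLeaf n false).
Definition wt (j : 'I_L.+1) : R := (nth d0 A j).1.
Definition tr (j : 'I_L.+1) : dtree n := (nth d0 A j).2.

Lemma wt_ge0 j : 0 <= wt j.
Proof.
rewrite /wt; case: (ltnP j L) => Hj; last by rewrite nth_default.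
by case: HA => /all_nthP H _; apply: H.
Qed.

Lemma tr_depth j : (dt_depth (tr j) <= T)%N.
Proof.
rewrite /tr; case: (ltnP j L) => Hj; last by rewrite nth_default.
by case: HA => _ [_ /all_nthP H]; apply: H.
Qed.

Lemma wt_max : wt ord_max = 0.
Proof. by rewrite /wt nth_default. Qed.

Lemma sum_seq_ord (F : R * dtree n -> R) : F d0 = 0 ->
  \sum_(pt <- A) F pt = \sum_(j < L.+1) F (nth d0 A j).
Proof.
move=> F0; rewrite big_ord_recr /= nth_default // F0 addr0.
by rewrite (big_nth d0) big_mkord.
Qed.

Lemma sum_wt : \sum_j wt j = 1.
Proof. by case: HA => _ [H _]; rewrite -H (@sum_seq_ord (fun pt => pt.1)). Qed.

Definition Hist := {ffun 'I_T.+1 -> bool}.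
Definition W := ('I_L.+1 * Hist)%type.
Definition h0 : Hist := [ffun => false].
Lemma cardW : #|{: W}| = (#|{: W}|.-1).+1.
Proof. by rewrite prednK //; apply/card_gt0P; exists (ord0, h0). Qed.
Definition m := #|{: W}|.-1.
Definition enc (w : W) : 'I_m.+1 := cast_ord cardW (enum_rank w).
Definition dec (z : 'I_m.+1) : W := enum_val (cast_ord (esym cardW) z).
Lemma encK : cancel enc dec.
Proof. by move=> w; rewrite /dec /enc cast_ordK enum_rankK. Qed.

Lemma decK : cancel dec enc.
Proof. by move=> z; rewrite /dec /enc enum_valK cast_ordKV. Qed.

Definition hf (h : Hist) : nat -> bool := fun k => h (inord k).
Definition qs (j : 'I_L.+1) (h : Hist) (t : nat) : 'I_n := qry i0 (wk (tr j) (hf h) t).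
Definition out (j : 'I_L.+1) (h : Hist) : bool := leafv (wk (tr j) (hf h) T).

Definition Hx (t : nat) (j : 'I_L.+1) (x : input n) : Hist :=
  [ffun k : 'I_T.+1 => (k < t)%N && x (qry i0 (dpath i0 (tr j) x k))].

Definition Sx (t : nat) (j : 'I_L.+1) (x : input n) : qbasis n m :=
  (qs j (Hx t j x) t, (t == T) && out j (Hx t j x), enc (j, Hx t j x)).

Lemma Sx_inj t x : injective (fun j => Sx t j x).
Proof. by move=> j j' /(congr1 (fun c => (dec c.2).1)) /=; rewrite !encK. Qed.

Definition slot (t : nat) : 'I_T.+1 := inord t.

Definition swp (a b i : 'I_n) : 'I_n := if i == a then b else if i == b then a else i.
Lemma swpK a b : involutive (swp a b).
Proof.
move=> i; rewrite /swp; case: (eqVneq i a) => [->|Hia].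
  by rewrite eqxx; case: eqVneq.
case: (eqVneq i b) => [->|Hib]; first by rewrite eqxx.
by rewrite (negbTE Hia) (negbTE Hib).
Qed.
Lemma swpL a b : swp a b a = b.
Proof. by rewrite /swp eqxx. Qed.

Definition g (t : nat) (c : qbasis n m) : qbasis n m :=
  let: (i, b, z) := c in let: (j, h) := dec z in
  let h' := [ffun k => if k == slot t.-1 then b else h k] in
  let hc := [ffun k => if k == slot t.-1 then false else h' k] in
  (swp (qs j hc t.-1) (qs j h' t) i, h (slot t.-1) (+) ((t == T) && out j h'),
   enc (j, h')).

Definition ginv (t : nat) (c : qbasis n m) : qbasis n m :=
  let: (i, b, z) := c in let: (j, h') := dec z in
  let hs := b (+) ((t == T) && out j h') in
  let h := [ffun k => if k == slot t.-1 then hs else h' k] in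
  let hc := [ffun k => if k == slot t.-1 then false else h' k] in
  (swp (qs j hc t.-1) (qs j h' t) i, h' (slot t.-1), enc (j, h)).

Lemma gK t : cancel (g t) (ginv t).
Proof.
case=> [[i b] z]; rewrite /g /ginv; case E: (dec z) => [j h] /=.
rewrite encK /= swpK ffunE eqxx addbK.
have -> : [ffun k => if k == slot t.-1 then h (slot t.-1)
     else [ffun k0 => if k0 == slot t.-1 then b else h k0] k] = h.
  by apply/ffunP => k; rewrite !ffunE; case: eqP => // ->.
by rewrite -E decK.
Qed.

Definition s0 (j : 'I_L.+1) : qbasis n m := (qs j h0 0, (0 == T) && out j h0, enc (j, h0)).
Lemma Sx0 j x : Sx 0 j x = s0 j.
Proof.
rewrite /Sx /s0; have -> // : Hx 0 j x = h0.
by apply/ffunP => k; rewrite !ffunE.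
Qed.
Lemma s0_inj : injective s0.
Proof. by move=> j j' /(congr1 (fun c => (dec c.2).1)) /=; rewrite !encK. Qed.

Definition e0 : qbasis n m := (i0, false, enc (ord_max, h0)).
Definition psi (r : qbasis n m) : R := \sum_j Num.sqrt (wt j) * (r == s0 j)%:R.
Definition vv (r : qbasis n m) : R := (r == e0)%:R - psi r.
Definition Hh (r c : qbasis n m) : R := (r == c)%:R - vv r * vv c.

Lemma psi_e : psi e0 = 0.
Proof.
rewrite /psi big1 // => j _; case: eqP => [E|_]; last by rewrite mulr0.
move: (congr1 (fun c => (dec c.2).1) E) => /=; rewrite !encK /= => <-.
by rewrite wt_max sqrtr0 mul0r.
Qed.

Lemma sum_psi2 : \sum_r psi r ^+ 2 = 1.
Proof.
rewrite (@sum_inj R R _ _ s0 (fun a => a ^+ 2) (fun j => Num.sqrt (wt j)) predT s0_inj) ?expr0n //.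
rewrite -[RHS]sum_wt; apply: eq_bigr => j _ /=; by rewrite mul1r sqr_sqrtr // wt_ge0.
Qed.

Lemma sum_delta (c : qbasis n m) (F : qbasis n m -> R) :
  \sum_r (r == c)%:R * F r = F c.
Proof.
rewrite (bigD1 c) //= eqxx mul1r big1 ?addr0 // => r /negbTE ->; by rewrite mul0r.
Qed.

Lemma sum_vv2 : \sum_r vv r ^+ 2 = 2.
Proof.
rewrite /vv.
rewrite (eq_bigr (fun r => (r == e0)%:R * (1 - 2 * psi r) + psi r ^+ 2)); last first.
  by move=> r _; case: (r == e0); rewrite /= ?mul1r ?mul0r; ring.
by rewrite big_split /= sum_delta sum_psi2 psi_e; ring.
Qed.

Lemma Hh_unit j j' : \sum_r Hh r j * Hh r j' = (j == j')%:R.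
Proof.
rewrite /Hh.
rewrite (eq_bigr (fun r => (r == j)%:R * (r == j')%:R
   - vv j' * ((r == j)%:R * vv r) - vv j * ((r == j')%:R * vv r)
   + vv j * vv j' * vv r ^+ 2)); last by move=> r _; ring.
rewrite !big_split /= !sumrN -!mulr_sumr !sum_delta.
have := sum_vv2; rewrite /vv => ->; rewrite eq_sym; ring.
Qed.

Definition Uq (t : nat) : @qop R n m :=
  if t is 0 then (fun r c => (Hh r c)%:C%C) else @pmat R _ _ (g t).

Definition Qsim : @qalg R n := @QAlg R n m e0 Uq.

Lemma Qsim_valid : qalg_valid T Qsim.
Proof.
move=> [|t] _ /=.
  by apply: (@real_unitary _ _ _ _ Hh) => // j j'; apply: Hh_unit.
by apply: unitary_pmat; apply: (can_inj (@gK t.+1)).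
Qed.

Lemma slotE t : (t <= T)%N -> nat_of_ord (slot t) = t.
Proof. by move=> Ht; rewrite /slot inordK. Qed.

Lemma qs_path t j x : (t <= T)%N -> qs j (Hx t j x) t = qry i0 (dpath i0 (tr j) x t).
Proof.
move=> Ht; rewrite /qs (@wk_path _ i0 _ _ x) // => k Hk.
rewrite /hf ffunE inordK; last by apply: leq_trans Ht; apply: ltnW.
by rewrite Hk.
Qed.

Lemma stepS t j x : (t < T)%N -> g t.+1 (flipx x (Sx t j x)) = Sx t.+1 j x.
Proof.
move=> Ht; have Ht' := ltnW Ht.
rewrite /g /Sx /flipx /= encK /=.
have Tt : (t == T) = false by apply/negbTE; rewrite neq_ltn Ht.
rewrite Tt /=.
set Ht0 := Hx t j x.
have Eh' : [ffun k => if k == slot t then x (qs j Ht0 t) else Ht0 k] = Hx t.+1 j x.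
  apply/ffunP => k; rewrite !ffunE; case: eqP => [->|Hk].
    by rewrite slotE // ltnSn qs_path.
  have Hkt : (nat_of_ord k != t).
    by apply/eqP => Hk'; apply: Hk; apply: val_inj; rewrite /= slotE.
  by have -> : (k < t.+1)%N = (k < t)%N by move: Hkt; lia.
rewrite Eh'.
have Ehc : [ffun k => if k == slot t then false else Hx t.+1 j x k] = Ht0.
  rewrite -Eh'; apply/ffunP => k; rewrite !ffunE; case: eqP => [->|//].
  by rewrite slotE // ltnn.
have H0 : Ht0 (slot t) = false by rewrite /Ht0 /Hx ffunE slotE // ltnn.
rewrite H0 /=; congr (_, _, _); by rewrite Ehc swpL.
Qed.

Lemma qapply_qinit (M : @qop R n m) (c : qbasis n m) r :
  qapply M (qinit c) r = M r c.
Proof.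
rewrite /qapply /qinit (bigD1 c) //= eqxx mulr1 big1 ?addr0 // => c' /negbTE ->.
by rewrite mulr0.
Qed.

Lemma Hh_e r : Hh r e0 = psi r.
Proof.
have H1 : vv e0 = 1 by rewrite /vv eqxx psi_e subr0.
rewrite /Hh H1 mulr1 /vv; ring.
Qed.

Definition amp (j : 'I_L.+1) : R[i] := (Num.sqrt (wt j))%:C%C.

Lemma qrun_sim x t : (t <= T)%N ->
  qrun Uq e0 x t = fun r => \sum_j amp j * (r == Sx t j x)%:R.
Proof.
elim: t => [|t IH] Ht.
  apply: funext => r; rewrite [qrun _ _ _ _]/= qapply_qinit (Hh_e r) /psi.
  rewrite (rmorph_sum (real_complex R)); apply: eq_bigr => j _.
  by rewrite rmorphM rmorph_nat /amp; congr (_ * _%:R); congr (_ == _).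
rewrite [qrun _ _ _ _]/= (IH (ltnW Ht)) oracleE qapply_pmat qapply_pmat.
apply: funext => r; apply: eq_bigr => j _; congr (_ * _%:R); congr (_ == _).
exact: stepS.
Qed.

Lemma out_eval j x : out j (Hx T j x) = dt_eval (tr j) x.
Proof.
rewrite (@eval_path _ i0 _ _ T) ?tr_depth // /out (@wk_path _ i0 _ _ x) // => k Hk.
by rewrite /hf ffunE inordK ?Hk // ltnW.
Qed.

Lemma Qsim_prob1 x : qalg_prob1 T Qsim x = \sum_j wt j * (dt_eval (tr j) x)%:R.
Proof.
rewrite /qalg_prob1 /= qrun_sim //.
rewrite (@sum_inj R _ _ _ (fun j => Sx T j x) (@sqnorm R) amp); last first.
- by rewrite /sqnorm /= expr0n addr0.
- exact: Sx_inj.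
apply: eq_bigr => j _; rewrite /amp sqnormR sqr_sqrtr; last exact: wt_ge0.
rewrite /Sx /= eqxx /= out_eval mulrC.
by [].
Qed.

Lemma Qsim_succ (f : boolfun n) x : qalg_succ T Qsim f x = ralg_succ A f x.
Proof.
rewrite /qalg_succ Qsim_prob1 /ralg_succ (@sum_seq_ord (fun pt => pt.1 * (dt_eval pt.2 x == f x)%:R)) ?mul0r //.
case: (f x).
  by apply: eq_bigr => j _; rewrite eqb_id.
transitivity (\sum_j wt j - \sum_j wt j * (dt_eval (tr j) x)%:R); first by rewrite sum_wt.
rewrite -sumrB; apply: eq_bigr => j _; rewrite /wt /tr.
by case: (dt_eval _ x) => /=; rewrite ?mulr1 ?mulr0 ?subrr ?subr0.
Qed.
End Sim.


Section QLB.
Variables (R : realType) (n k T : nat) (Q : @qalg R n).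
Hypothesis HQ : qalg_valid T Q.
Hypothesis Hs : forall x, 1 / 2 < qalg_succ T Q (@TH n k) x.
Let p := min_succ (qalg_succ T Q (@TH n k)).
Let be := p - 1 / 2.

Lemma be_gt0 : 0 < be.
Proof.
rewrite /be /p subr_gt0 /min_succ; apply: lt_bigmin => //; first lra.
Qed.

Lemma p_le x : p <= qalg_succ T Q (@TH n k) x.
Proof. exact: bigmin_le. Qed.

Lemma pt_bound x i : @TH n k (flipb x i) = ~~ @TH n k x ->
  be ^+ 2 <= Nv (vsub (phi (A:=Q) x T) (phi (flipb x i) T)).
Proof.
move=> Hf; have hb := be_gt0.
have Ep : forall z, qalg_prob1 T Q z = \sum_(r | r.1.2) sqnorm (phi (A:=Q) z T r) by [].
have H1 := p_le x; have H2 := p_le (flipb x i).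
move: H1 H2; rewrite /qalg_succ Hf !Ep.
have Na := Nv_phi HQ x (leqnn T); have Nb := Nv_phi HQ (flipb x i) (leqnn T).
have Eb : be = p - 1 / 2 by [].
case: (@TH n k x) => /= H1 H2.
- have := probdiff (fun r => r.1.2) Na Nb hb.
  have H4 : 2 * be <= \sum_(r | r.1.2) sqnorm (phi (A:=Q) x T r) - \sum_(r | r.1.2) sqnorm (phi (A:=Q) (flipb x i) T r) by lra.
  have := ler_wpM2l (ltW hb) H4; lra.
- have := probdiff (fun r => r.1.2) Nb Na hb.
  rewrite Nv_subC.
  have H4 : 2 * be <= \sum_(r | r.1.2) sqnorm (phi (A:=Q) (flipb x i) T r) - \sum_(r | r.1.2) sqnorm (phi (A:=Q) x T r) by lra.
  have := ler_wpM2l (ltW hb) H4; lra.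
Qed.

Lemma base_bound x (Pi : pred 'I_n) :
  (forall i, Pi i -> @TH n k (flipb x i) = ~~ @TH n k x) ->
  be ^+ 2 * \sum_i ((Pi i)%:R : R) <= 8 * 2 ^+ T * T%:R.
Proof.
move=> HP; apply: le_trans (Esum HQ x Pi).
rewrite mulr_sumr (eq_bigr (fun i => if Pi i then be ^+ 2 else 0)); last first.
  by move=> i _; case: (Pi i); rewrite ?mulr1 ?mulr0.
rewrite -big_mkcond /=; apply: ler_sum => i Hi; exact: pt_bound (HP i Hi).
Qed.

Hypothesis Hk : (k <= n - 1)%N.
Hypothesis Hn : (1 <= n)%N.

Lemma qlb_main : 0 < be /\ (n.+1)%:R * be ^+ 2 <= 16 * 2 ^+ T * T%:R.
Proof.
split; first exact: be_gt0.
have B0 := @base_bound (pref n k) (fun i => ~~ pref n k i).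
have B1 := @base_bound (pref n k.+1) (fun i => pref n k.+1 i).
have W0 := @hweight_pref n k ltac:(lia).
have W1 := @hweight_pref n k.+1 ltac:(lia).
have C0 : be ^+ 2 * (n%:R - k%:R) <= 8 * 2 ^+ T * T%:R.
  rewrite -W0 -sum_nbool_R; apply: B0 => i /negbTE Hi.
  have := hweight_flip (pref n k) i; rewrite Hi W0 /= => Hw.
  rewrite /TH W0 ltnn /=; apply/idP; lia.
have C1 : be ^+ 2 * (k.+1%:R) <= 8 * 2 ^+ T * T%:R.
  rewrite -W1 -sum_bool_R; apply: B1 => i Hi.
  have := hweight_flip (pref n k.+1) i; rewrite Hi W1 /= => Hw.
  rewrite /TH W1 ltnSn /=; apply/negbTE; rewrite -leqNgt; lia.
have E : (n.+1%:R : R) * be ^+ 2 = be ^+ 2 * (n%:R - k%:R) + be ^+ 2 * (k.+1%:R).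
  rewrite -!natr1; ring.
rewrite E; lra.
Qed.
End QLB.


Section Logs.
Variable R : realType.

Lemma ln2_gt0 : 0 < ln (2 : R).
Proof. by apply: ln_gt0; rewrite ltr1n. Qed.

Lemma cost_lb (n T : nat) (be : R) : (4096 <= n)%N -> 0 < be ->
  (n.+1)%:R * be ^+ 2 <= 16 * 2 ^+ T * T%:R ->
  1 / 4 * log2 (n%:R : R) <= T%:R + log2 (1 / (2 * be)).
Proof.
move=> Hn hb H.
have l2 := ln2_gt0.
set X : R := 2 ^+ T.
have hX : 0 < X by rewrite exprn_gt0.
have hT : (T%:R : R) <= X.
  rewrite /X -natrX ler_nat; exact: ltnW (ltn_expl _ (ltnSn 1)).
have H2 : (n.+1)%:R * be ^+ 2 <= 16 * X ^+ 2.
  apply: le_trans H _; rewrite expr2 mulrA; apply: ler_wpM2l => //.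

set Y := X / (2 * be).
have hY : 0 < Y by rewrite divr_gt0 // mulr_gt0.
have hn : (0 : R) < n%:R by rewrite ltr0n; lia.
have HnY : (n%:R : R) <= Y ^+ 4.
  rewrite /Y expr_div_n ler_pdivlMr ?exprn_gt0 ?mulr_gt0 //.
  have hN : (4096 * n%:R : R) <= n.+1%:R ^+ 2.
    rewrite -natrM -natrX ler_nat; nia.
  have hb2 : 0 <= be ^+ 2 by apply: sqr_ge0.
  have hb4 : be ^+ 4 = (be ^+ 2) ^+ 2 by rewrite -exprM.
  have hX4 : X ^+ 4 = (X ^+ 2) ^+ 2 by rewrite -exprM.
  have hsq : (n.+1%:R * be ^+ 2) ^+ 2 <= (16 * X ^+ 2) ^+ 2.
    rewrite ler_sqr ?nnegrE //; first by apply: mulr_ge0.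
    by apply: mulr_ge0 => //; apply: sqr_ge0.
  rewrite exprMn (_ : (2 : R) ^+ 4 = 16); last by rewrite -natrX.
  rewrite hb4 hX4; move: hsq; rewrite !exprMn.
  set b2 := be ^+ 2 in hb2 *; set x2 := X ^+ 2.
  set N1 := n.+1%:R ^+ 2 in hN *; set nn := (n%:R : R) in hN hn *.
  have hb22 : 0 <= b2 ^+ 2 by apply: sqr_ge0.
  have := ler_wpM2r hb22 hN.
  lra.
have key : ln (n%:R : R) <= 4 * (T%:R * ln 2 + ln (1 / (2 * be))).
  have -> : T%:R * ln 2 + ln (1 / (2 * be)) = ln Y.
    rewrite /Y mulrC mulr_natr -lnXn // -lnM ?posrE //; last by rewrite divr_gt0 // mulr_gt0.
    by rewrite mulrA mulr1.
  have E4 : 4 * ln Y = ln (Y ^+ 4) by rewrite lnXn // mulr_natl.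
  by rewrite E4 ler_ln ?posrE // exprn_gt0.
rewrite /log2.
have -> : (T%:R : R) + ln (1 / (2 * be)) / ln 2 = (T%:R * ln 2 + ln (1 / (2 * be))) / ln 2.
  by field; rewrite lt0r_neq0.
have -> : 1 / 4 * (ln (n%:R : R) / ln 2) = (ln (n%:R) / 4) / ln 2 by field; rewrite lt0r_neq0.
apply: ler_wpM2r; first by rewrite invr_ge0 ltW.
lra.
Qed.

Lemma cost_ub (n : nat) (p : R) : (2 <= n)%N -> 1 / 2 + 1 / (4 * n%:R) <= p ->
  wu_cost 1 p <= 3 * log2 (n%:R : R).
Proof.
move=> Hn Hp; have l2 := ln2_gt0.
have hn : (2 : R) <= n%:R by rewrite ler_nat.
have hb : 0 < p - 1 / 2.
  have : 0 < 1 / (4 * (n%:R : R)) by rewrite divr_gt0 // mulr_gt0 //; lra.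
  lra.
have h1 : 1 / (2 * (p - 1 / 2)) <= 2 * n%:R.
  rewrite ler_pdivrMr ?mulr_gt0 //.
  have : 1 / (4 * n%:R) <= p - 1 / 2 by lra.
  rewrite ler_pdivrMr ?mulr_gt0 //; lra.
have h2 : ln (1 / (2 * (p - 1 / 2))) <= ln 2 + ln (n%:R : R).
  rewrite -lnM ?posrE; [|lra|lra].
  by rewrite ler_ln ?posrE //; [rewrite divr_gt0 // mulr_gt0 | rewrite mulr_gt0 //; lra].
have h3 : ln (2 : R) <= ln (n%:R : R) by rewrite ler_ln ?posrE //; lra.
rewrite /wu_cost /log2.
have -> : (1%:R : R) + ln (1 / (2 * (p - 1 / 2))) / ln 2 =
   (ln 2 + ln (1 / (2 * (p - 1 / 2)))) / ln 2 by field; rewrite lt0r_neq0.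
rewrite mulrA; apply: ler_wpM2r; first by rewrite invr_ge0 ltW.
lra.
Qed.
End Logs.


Section Final.
Variable R : realType.

Lemma TH_pref0 n k : @TH n k (pref n 0) = false.
Proof. by rewrite /TH hweight_pref. Qed.

Lemma TH_prefn n k : (1 <= n)%N -> (k <= n - 1)%N -> @TH n k (pref n n) = true.
Proof. by move=> Hn Hk; rewrite /TH hweight_pref //; lia. Qed.

Lemma no0_classical n k (A : @ralg R n) : (1 <= n)%N -> (k <= n - 1)%N ->
  ralg_valid 0 A -> ~ (forall x, 1 / 2 < ralg_succ A (@TH n k) x).
Proof.
move=> Hn Hk [_ [Hs Hd]] H.
have H0 := H (pref n 0); have H1 := H (pref n n).
have : ralg_succ A (@TH n k) (pref n 0) + ralg_succ A (@TH n k) (pref n n) = 1.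
  rewrite /ralg_succ TH_pref0 TH_prefn // -big_split /= -[RHS]Hs.
  elim: (A) Hd => [|pt B IH]; first by rewrite !big_nil.
  rewrite /= !big_cons => /andP [Hpt Hd]; rewrite IH //; congr (_ + _).
  case: pt Hpt => w [b|i t0 t1] //= _.
  by case: b; rewrite /= ?mulr0 ?mulr1 ?addr0 ?add0r.
lra.
Qed.

Lemma no0_quantum n k (Q : @qalg R n) : (1 <= n)%N -> (k <= n - 1)%N ->
  ~ (forall x, 1 / 2 < qalg_succ 0 Q (@TH n k) x).
Proof.
move=> Hn Hk H.
have H0 := H (pref n 0); have H1 := H (pref n n).
move: H0 H1; rewrite /qalg_succ TH_pref0 TH_prefn //.
have -> : qalg_prob1 0 Q (pref n n) = qalg_prob1 0 Q (pref n 0) by [].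
lra.
Qed.

Lemma part1 n k : (2 <= n)%N -> (k <= n - 1)%N ->
  @UC R n (@TH n k) = 1 /\ @UQ R n (@TH n k) = 1.
Proof.
move=> Hn Hk; have Hn1 : (1 <= n)%N by lia.
have i0 : 'I_n by exists 0%N; lia.
split.
- rewrite /UC; set S := (X in inf X).
  have lbS : lbound S 1.
    move=> c [T [A [HA [Hs ->]]]]; case: T HA Hs => [|T] HA Hs.
      by exfalso; apply: (no0_classical Hn1 Hk HA Hs).
    by rewrite ler1n.
  have S1 : S 1.
    exists 1%N, (A1 R n k); split; first exact: A1_valid.
    split => // x; apply: lt_le_trans (A1_succ R Hn1 Hk x).
    by rewrite ltrDl divr_gt0 // mulr_gt0 // ltr0n; lia.
  apply/eqP; rewrite eq_le; apply/andP; split.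
    by apply: ge_inf => //; exists 1.
  by apply: lb_le_inf => //; exists 1.
- rewrite /UQ; set S := (X in inf X).
  have lbS : lbound S 1.
    move=> c [T [A [HA [Hs ->]]]]; case: T HA Hs => [|T] HA Hs.
      by exfalso; apply: (no0_quantum Hn1 Hk Hs).
    by rewrite ler1n.
  have S1 : S 1.
    exists 1%N, (Qsim i0 1 (A1 R n k)); split; first exact: Qsim_valid (A1_valid R Hn1 Hk).
    split => // x; rewrite Qsim_succ; last exact: A1_valid.
    apply: lt_le_trans (A1_succ R Hn1 Hk x).
    by rewrite ltrDl divr_gt0 // mulr_gt0 // ltr0n; lia.
  apply/eqP; rewrite eq_le; apply/andP; split.
    by apply: ge_inf => //; exists 1.
  by apply: lb_le_inf => //; exists 1.
Qed.

Lemma A1_min n k : (2 <= n)%N -> (k <= n - 1)%N ->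
  1 / 2 + 1 / (4 * n%:R) <= min_succ (ralg_succ (A1 R n k) (@TH n k)).
Proof.
move=> Hn Hk; have Hn1 : (1 <= n)%N by lia.
have hn : (2 : R) <= n%:R by rewrite ler_nat.
apply: le_bigmin => [|x _]; last exact: A1_succ.
have : 1 / (4 * n%:R) <= (1 / 2 : R).
  rewrite ler_pdivrMr ?mulr_gt0 //; lra.
lra.
Qed.

Lemma part2 : exists c1 c2 : R, 0 < c1 /\ 0 < c2 /\
     exists N : nat, forall n k : nat, (N <= n)%N -> (k <= n - 1)%N ->
       c1 * log2 (n%:R : R) <= @WUQ R n (@TH n k) /\
       @WUQ R n (@TH n k) <= @WUC R n (@TH n k) /\
       @WUC R n (@TH n k) <= 3 * log2 (n%:R : R).
Proof.
exists (1 / 4), 3; split; first by lra. split; first by lra.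
exists 4096%N => n k Hn Hk.
have Hn1 : (1 <= n)%N by lia.
have Hn2 : (2 <= n)%N by lia.
have i0 : 'I_n by exists 0%N; lia.
rewrite /WUC; set SC := (X in inf X).
rewrite /WUQ; set SQ := (X in inf X).
have lbQ : lbound SQ (1 / 4 * log2 (n%:R : R)).
  move=> c [T [Q [HQ [Hs ->]]]].
  have [hb hbound] := qlb_main HQ Hs Hk Hn1.
  rewrite /wu_cost; exact: cost_lb Hn hb hbound.
have subSC : forall c, SC c -> SQ c.
  move=> c [T [A [HA [Hs ->]]]].
  exists T, (Qsim i0 T A); split; first exact: Qsim_valid.
  have E : qalg_succ T (Qsim i0 T A) (@TH n k) = ralg_succ A (@TH n k).
    by apply: funext => x; apply: Qsim_succ.
  by rewrite E; split.
have c0 : SC (wu_cost 1 (min_succ (ralg_succ (A1 R n k) (@TH n k)))).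
  exists 1%N, (A1 R n k); split; first exact: A1_valid.
  split => // x; apply: lt_le_trans (A1_succ R Hn1 Hk x).
  by rewrite ltrDl divr_gt0 // mulr_gt0 // ltr0n; lia.
have hQ : has_lbound SQ by exists (1 / 4 * log2 (n%:R : R)).
split; [|split].
- by apply: lb_le_inf => //; exists (wu_cost 1 (min_succ (ralg_succ (A1 R n k) (@TH n k)))); apply: subSC.
- apply: lb_le_inf; first by eexists; exact: c0.
  by move=> c Hc; apply: ge_inf => //; apply: subSC.
- apply: le_trans (cost_ub Hn2 (A1_min Hn2 Hk)).
  apply: ge_inf => //; exists (1 / 4 * log2 (n%:R : R)) => c Hc; apply: lbQ; exact: subSC.
Qed.
End Final.

Theorem theorem6 (R : realType) :
  (forall n k : nat, (2 <= n)%N -> (k <= n - 1)%N ->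
     @UC R n (@TH n k) = 1 /\ @UQ R n (@TH n k) = 1) /\
  (exists c1 c2 : R, 0 < c1 /\ 0 < c2 /\
     exists N : nat, forall n k : nat, (N <= n)%N -> (k <= n - 1)%N ->
       c1 * log2 (n%:R : R) <= @WUQ R n (@TH n k) /\
       @WUQ R n (@TH n k) <= @WUC R n (@TH n k) /\
       @WUC R n (@TH n k) <= c2 * log2 (n%:R : R)).
Proof.
split; first exact: part1.
have [c1 [c2 [h1 [h2 [N HN]]]]] := part2 R.
by exists c1, 3; split => //; split; [lra|exists N].
Qed.
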